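(* Let $M$ be a module over a ring $R$ and $r\in R$. Then $\sigma_r=\delta_S$ for some $S\subseteq M$ if and only if $r$ is a multiplicative identity for $M$, i.e. $ru=u$ for all $u\in M$.
   Context: $\sigma_r:\mathcal{P}(M)\to\mathcal{P}(M)$ is $\sigma_r(X)=\{ru: u\in X\}$. For $S\subseteq M$, the dilation is $\delta_S(X)=X\oplus S=\{x+s : x\in X, s\in S\}$. *)

(* Defs.v *)
From HB Require Import structures.
From mathcomp Require Import all_boot all_order all_algebra.
Set Implicit Arguments. Unset Strict Implicit. Unset Printing Implicit Defensive.
Import GRing.Theory.
Local Open Scope ring_scope.

Definition scale_map (R : pzRingType) (M : lmodType R) (r : R)
  (X : M -> Prop) : M -> Prop :=
  fun y => exists u, X u /\ y = r *: u.

Definition dilation (R : pzRingType) (M : lmodType R) (S : M -> Prop)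
  (X : M -> Prop) : M -> Prop :=
  fun y => exists x s, X x /\ S s /\ y = x + s.

(* Main.v *)
Require Import Defs.
From HB Require Import structures.
From mathcomp Require Import all_boot all_order all_algebra.
From Stdlib Require Import FunctionalExtensionality PropExtensionality.
Import GRing.Theory.
Local Open Scope ring_scope.

Theorem mainTheorem14 (R : pzRingType) (M : lmodType R) (r : R) :
  (exists S : M -> Prop, scale_map r = dilation S) <->
  (forall u : M, r *: u = u).
Proof.
split.
- move=> [S HS] u.
  have S0 : forall y, S y -> y = 0.
    move=> y Sy.
    have : dilation S (fun x => x = 0) y by exists 0, y; rewrite add0r.
    rewrite -HS => -[v [-> ->]]; by rewrite scaler0.
  have : scale_map r (fun x => x = u) (r *: u) by exists u.
  rewrite HS => -[x [s [-> [Ss ->]]]]; by rewrite (S0 _ Ss) addr0.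
- move=> H; exists (fun x => x = 0).
  apply: functional_extensionality => X.
  apply: functional_extensionality => y.
  apply: propositional_extensionality; split.
  + move=> [u [Xu ->]]; exists u, 0; by rewrite H addr0.
  + move=> [x [s [Xx [-> ->]]]]; exists x; by rewrite H addr0.
Qed.
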